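(* Let $H\in\mathbb R^{n\times n}$, $f\in\mathbb R^n$, $A\in\mathbb R^{m\times n}$, $b\in\mathbb R^m$, with $\mathcal X=\{x\in\mathbb R^n: Ax\le b\}$ nonempty and $H+H^\top$ positive definite. Let $x^*$ be the unique solution of the affine variational inequality: find $x\in\mathcal X$ with $(Hx+f)^\top(y-x)\ge 0$ for all $y\in\mathcal X$. Then the sequence $\{z_k\}$ generated by the DR-DAQP algorithm (described in the context) converges to $x^*$.
   Context: Notation: $A_i$, $b_i$ denote the $i$-th row of $A$ and entry of $b$; for an index set $\mathcal S$, $A_{\mathcal S}$, $b_{\mathcal S}$, $\lambda_{\mathcal S}$ denote the corresponding submatrix/subvectors. Fix $\rho>0$, set $H_s=\tfrac12(H+H^\top)$, $\tilde H=\rho I+H_s$, and for $z\in\mathbb R^n$ let $\tilde f(z)=f+(H-\tilde H)z$. For a parameter $z$, let $\mathrm{QP}(z)$ denote the strictly convex quadratic program $\min_x \tfrac12 x^\top\tilde Hx+\tilde f(z)^\top x$ subject to $Ax\le b$; its active set at the minimizer $y$ is $\{i: A_iy=b_i\}$. DR-DAQP algorithm: start from an initial $z_0\in\mathbb R^n$, set $\delta=\infty$, and let $\mathcal A_{-1}$ be undefined (so the test below fails at $k=0$). For $k=0,1,2,\dots$: 1. Let $y_k$ be the solution of $\mathrm{QP}(z_k)$ and $\mathcal A_k$ its active set. 2. If $\mathcal A_k=\mathcal A_{k-1}$: let $(\tilde z_k,\lambda_k)$ solve the linear system $\begin{bmatrix}H & A_{\mathcal A_k}^\top\\ A_{\mathcal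 A_k} & 0\end{bmatrix}\begin{bmatrix}x\\ \lambda\end{bmatrix}=\begin{bmatrix}-f\\ b_{\mathcal A_k}\end{bmatrix}$. If $\lambda_k\ge 0$ and $A\tilde z_k\le b$, stop and return $(\tilde z_k,\lambda_k)$. Otherwise, let $\tilde y_k$ be the solution of $\mathrm{QP}(\tilde z_k)$ and redefine $\mathcal A_k$ as its active set; if $\|\tilde y_k-\tilde z_k\|<\delta$, replace $y_k\leftarrow\tilde y_k$, $z_k\leftarrow\tilde z_k$, and set $\delta\leftarrow\|\tilde y_k-\tilde z_k\|$. 3. Set $z_{k+1}=(\rho I+H)^{-1}\big(\rho y_k+Hz_k+\tfrac{1}{2}H_s(y_k-z_k)\big)$. The algorithm iterates indefinitely unless it stops in step 2. *)

(* Defs.v *)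
From HB Require Import structures.
From mathcomp Require Import all_boot all_order all_algebra.
From mathcomp Require Import all_classical all_reals all_analysis.
Set Implicit Arguments. Unset Strict Implicit. Unset Printing Implicit Defensive.
Import Order.TTheory GRing.Theory Num.Theory.
Import numFieldNormedType.Exports.
Local Open Scope ring_scope.

Section DRDAQP.
Variables (R : realType) (n m : nat).
Notation vec := 'cV[R]_n.

Definition dotv (u v : vec) : R := (u^T *m v) 0 0.
Definition enorm (v : vec) : R := Num.sqrt (\sum_i (v i 0) ^+ 2).

Definition feas (A : 'M[R]_(m, n)) (b : 'cV[R]_m) (x : vec) : Prop :=
  forall i, (A *m x) i 0 <= b i 0.

Definition active (A : 'M[R]_(m, n)) (b : 'cV[R]_m) (y : vec) : {set 'I_m} :=
  [set i | (A *m y) i 0 == b i 0].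

Definition Hsym (H : 'M[R]_n) : 'M[R]_n := 2^-1 *: (H + H^T).
Definition Htil (rho : R) (H : 'M[R]_n) : 'M[R]_n := rho%:M + Hsym H.
Definition ftil (rho : R) (H : 'M[R]_n) (f z : vec) : vec :=
  f + (H - Htil rho H) *m z.

Definition qp_obj (rho : R) (H : 'M[R]_n) (f z x : vec) : R :=
  2^-1 * dotv x (Htil rho H *m x) + dotv (ftil rho H f z) x.
Definition qp_sol (rho : R) (H : 'M[R]_n) (f : vec) (A : 'M[R]_(m, n))
    (b : 'cV[R]_m) (z y : vec) : Prop :=
  feas A b y /\ forall x, feas A b x -> qp_obj rho H f z y <= qp_obj rho H f z x.

(* (x, lam) solves [H A_S^T; A_S 0] [x; lam_S] = [-f; b_S];
   lam is encoded as an m-vector vanishing outside S. *)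
Definition kkt_lin (H : 'M[R]_n) (f : vec) (A : 'M[R]_(m, n)) (b : 'cV[R]_m)
    (S : {set 'I_m}) (x : vec) (lam : 'cV[R]_m) : Prop :=
  [/\ (forall i, i \notin S -> lam i 0 = 0),
      H *m x + A^T *m lam = - f &
      (forall i, i \in S -> (A *m x) i 0 = b i 0)].

Definition stop_test (A : 'M[R]_(m, n)) (b : 'cV[R]_m) (S : {set 'I_m})
    (x : vec) (lam : 'cV[R]_m) : Prop :=
  (forall i, i \in S -> 0 <= lam i 0) /\ feas A b x.

(* delta in R U {+oo}: None = +oo *)
Definition lt_delta (x : R) (d : option R) : Prop :=
  match d with None => True | Some d' => x < d' end.

Definition next_z (rho : R) (H : 'M[R]_n) (y z : vec) : vec :=
  invmx (rho%:M + H) *m (rho *: y + H *m z + 2^-1 *: (Hsym H *m (y - z))).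

(* Inputs:  zk   = z_k from step 3 (or z_0),
            prev = Some A_{k-1} (final active set of iteration k-1), None at k=0,
            dk   = delta at the start of iteration k.
   Outputs: zf, yf = values of z_k, y_k after step 2 (used in step 3),
            Ak   = final A_k, dk' = delta after iteration k,
            (zt, lam) = the linear-system solution computed in step 2 (if any). *)
Definition iter_nostop (rho : R) (H : 'M[R]_n) (f : vec) (A : 'M[R]_(m, n))
    (b : 'cV[R]_m) (zk : vec) (prev : option {set 'I_m}) (dk : option R)
    (zf yf : vec) (Ak : {set 'I_m}) (dk' : option R) : Prop :=
  exists yk : vec, qp_sol rho H f A b zk yk /\
  if prev == Some (active A b yk) then
    exists (zt : vec) (lam : 'cV[R]_m) (yt : vec),
      [/\ kkt_lin H f A b (active A b yk) zt lam,
          ~ stop_test A b (active A b yk) zt lam,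
          qp_sol rho H f A b zt yt,
          Ak = active A b yt &
          (if `[< lt_delta (enorm (yt - zt)) dk >] then
             [/\ zf = zt, yf = yt & dk' = Some (enorm (yt - zt))]
           else [/\ zf = zk, yf = yk & dk' = dk])]
  else [/\ zf = zk, yf = yk, Ak = active A b yk & dk' = dk].

Definition iter_stop (rho : R) (H : 'M[R]_n) (f : vec) (A : 'M[R]_(m, n))
    (b : 'cV[R]_m) (zk : vec) (prev : option {set 'I_m})
    (zt : vec) (lam : 'cV[R]_m) : Prop :=
  exists yk : vec, [/\ qp_sol rho H f A b zk yk,
    prev = Some (active A b yk),
    kkt_lin H f A b (active A b yk) zt lam &
    stop_test A b (active A b yk) zt lam].

Definition drdaqp_prefix (rho : R) (H : 'M[R]_n) (f : vec) (A : 'M[R]_(m, n))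
    (b : 'cV[R]_m) (z0 : vec) (N : nat)
    (z zf yf : nat -> vec) (act : nat -> {set 'I_m}) (delta : nat -> option R)
    : Prop :=
  [/\ z 0%N = z0, delta 0%N = None &
      forall k, (k < N)%N ->
        iter_nostop rho H f A b (z k)
          (if k is k'.+1 then Some (act k') else None) (delta k)
          (zf k) (yf k) (act k) (delta k.+1)
        /\ z k.+1 = next_z rho H (yf k) (zf k)].

Definition drdaqp_run (rho : R) (H : 'M[R]_n) (f : vec) (A : 'M[R]_(m, n))
    (b : 'cV[R]_m) (z0 : vec)
    (z zf yf : nat -> vec) (act : nat -> {set 'I_m}) (delta : nat -> option R)
    : Prop :=
  forall N, drdaqp_prefix rho H f A b z0 N z zf yf act delta.

End DRDAQP.

(* Main.v *)
Require Import Defs.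
From HB Require Import structures.
From mathcomp Require Import all_boot all_order all_algebra.
From mathcomp Require Import all_classical all_reals all_analysis.
From mathcomp Require Import ring lra.
Import Order.TTheory GRing.Theory Num.Theory.
Import numFieldNormedType.Exports.
Local Open Scope classical_set_scope.
Local Open Scope ring_scope.

Module Aux.
Set Implicit Arguments. Unset Strict Implicit. Unset Printing Implicit Defensive.

Section Dot.
Variables (R : realType) (n : nat).
Implicit Types (u v w : 'cV[R]_n) (Q : 'M[R]_n).

Lemma dotvE u v : dotv u v = \sum_i u i 0 * v i 0.
Proof. by rewrite /dotv mxE; apply: eq_bigr => i _; rewrite mxE. Qed.

Lemma dotvC u v : dotv u v = dotv v u.
Proof. by rewrite !dotvE; apply: eq_bigr => i _; rewrite mulrC. Qed.

Lemma dotvDr u v w : dotv u (v + w) = dotv u v + dotv u w.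
Proof. by rewrite !dotvE -big_split; apply: eq_bigr => i _; rewrite mxE mulrDr. Qed.

Lemma dotvDl u v w : dotv (v + w) u = dotv v u + dotv w u.
Proof. by rewrite dotvC dotvDr !(dotvC u). Qed.

Lemma dotvZr a u v : dotv u (a *: v) = a * dotv u v.
Proof. by rewrite !dotvE mulr_sumr; apply: eq_bigr => i _; rewrite mxE mulrCA. Qed.

Lemma dotvZl a u v : dotv (a *: v) u = a * dotv v u.
Proof. by rewrite dotvC dotvZr dotvC. Qed.

Lemma dotvNr u v : dotv u (- v) = - dotv u v.
Proof. by rewrite -scaleN1r dotvZr mulN1r. Qed.

Lemma dotvNl u v : dotv (- v) u = - dotv v u.
Proof. by rewrite dotvC dotvNr dotvC. Qed.

Lemma dotvBr u v w : dotv u (v - w) = dotv u v - dotv u w.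
Proof. by rewrite dotvDr dotvNr. Qed.

Lemma dotvBl u v w : dotv (v - w) u = dotv v u - dotv w u.
Proof. by rewrite dotvDl dotvNl. Qed.

Lemma dotv0r u : dotv u 0 = 0.
Proof. by rewrite dotvE big1 // => i _; rewrite mxE mulr0. Qed.

Lemma dotv0l u : dotv 0 u = 0.
Proof. by rewrite dotvC dotv0r. Qed.

Lemma dotv_mul u Q v : dotv u (Q *m v) = dotv (Q^T *m u) v.
Proof. by rewrite /dotv trmx_mul trmxK mulmxA. Qed.

Lemma dotv_mulT u Q v : dotv u (Q^T *m v) = dotv v (Q *m u).
Proof. by rewrite dotv_mul trmxK dotvC. Qed.

Lemma dotv_ge0 u : 0 <= dotv u u.
Proof. by rewrite dotvE sumr_ge0 // => i _; rewrite -expr2 sqr_ge0. Qed.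

Lemma dotv_eq0 u : dotv u u = 0 -> u = 0.
Proof.
rewrite dotvE => /eqP; rewrite psumr_eq0 => [/allP Hall|i _]; last by rewrite -expr2 sqr_ge0.
apply/matrixP => i j; rewrite (ord1 j) mxE.
have := Hall i (mem_index_enum _); rewrite -expr2 sqrf_eq0 => /eqP //.
Qed.

Lemma mulmx_scalar_l a v : a%:M *m v = a *: v.
Proof. exact: mul_scalar_mx. Qed.

Lemma unit_of_pos Q : (forall x, x != 0 -> dotv x (Q *m x) != 0) -> Q \in unitmx.
Proof.
move=> hQ; rewrite unitmxE unitfE; apply/negP => /det0P [v v0 vQ].
have : v^T != 0 by apply: contra v0 => /eqP h; rewrite -(trmxK v) h trmx0.
move/hQ; rewrite dotv_mul /dotv trmx_mul !trmxK vQ mul0mx mxE.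
by rewrite eqxx.
Qed.

End Dot.

Lemma dotvMl (R : realType) (n : nat) (Q : 'M[R]_n) (u v : 'cV[R]_n) :
  dotv (Q *m u) v = dotv v (Q *m u).
Proof. exact: dotvC. Qed.


Section Two.
Variables (R : realType) (n m : nat).
Implicit Types (u v w x y : 'cV[R]_n) (Q : 'M[R]_n).

Lemma dotv_mulTr (B : 'M[R]_(m, n)) (u : 'cV[R]_n) (v : 'cV[R]_m) :
  dotv u (B^T *m v) = dotv v (B *m u).
Proof.
rewrite /dotv.
have -> : forall M : 'M[R]_1, M 0 0 = M^T 0 0 by move=> M; rewrite mxE.
by rewrite !trmx_mul !trmxK mulmxA.
Qed.

Lemma mxentryB p q (M N : 'M[R]_(p, q)) i j : (M - N) i j = M i j - N i j.
Proof. by rewrite !mxE. Qed.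
Lemma mxentryD p q (M N : 'M[R]_(p, q)) i j : (M + N) i j = M i j + N i j.
Proof. by rewrite !mxE. Qed.
Lemma mxentryN p q (M : 'M[R]_(p, q)) i j : (- M) i j = - M i j.
Proof. by rewrite !mxE. Qed.
Lemma mxentryZ p q a (M : 'M[R]_(p, q)) i j : (a *: M) i j = a * M i j.
Proof. by rewrite !mxE. Qed.

Ltac dnorm0 := rewrite ?(mulmxDl, mulmxDr, mulmxBr, mulmxBl, mulmxN, mulNmx,
   mul_scalar_mx, dotvDl, dotvDr, dotvBl, dotvBr, dotvNl, dotvNr,
   dotvZl, dotvZr, dotv_mulT, dotv0l, dotv0r);
   repeat (rewrite -scalemxAr; rewrite ?(dotvZl, dotvZr));
   repeat (rewrite -scalemxAl; rewrite ?(dotvZl, dotvZr, mulmxDl, mulmxDr, dotvDl, dotvDr, dotv_mulT)).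

Lemma PD_H (H : 'M[R]_n) :
  (forall x : 'cV[R]_n, x != 0 -> 0 < dotv x ((H + H^T) *m x)) ->
  forall x, x != 0 -> 0 < dotv x (H *m x).
Proof.
move=> hPD x /hPD; dnorm0; lra.
Qed.

Lemma mono_uniq Q (hQ : forall x, x != 0 -> 0 < dotv x (Q *m x)) c x1 x2 :
  0 <= dotv (Q *m x1 + c) (x2 - x1) -> 0 <= dotv (Q *m x2 + c) (x1 - x2) ->
  x1 = x2.
Proof.
move=> h1 h2; apply/eqP; rewrite -subr_eq0; apply/negP => /negP /hQ.
move: h1 h2; dnorm0.
rewrite !(dotvC c) !(dotvC (Q *m x1)) !(dotvC (Q *m x2)).
lra.
Qed.


Lemma mulmx_entry_comb (B : 'M[R]_(m, n)) (u v : 'cV[R]_n) (t : R) i :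
  (B *m (u + t *: (v - u))) i 0 = (1 - t) * (B *m u) i 0 + t * (B *m v) i 0.
Proof. rewrite mulmxDr -scalemxAr mulmxBr !mxE. ring. Qed.

Lemma feas_comb (B : 'M[R]_(m, n)) b (u v : 'cV[R]_n) (t : R) :
  0 <= t <= 1 -> feas B b u -> feas B b v -> feas B b (u + t *: (v - u)).
Proof.
move=> /andP[t0 t1] hu hv i; rewrite mulmx_entry_comb.
have := hu i; have := hv i; nra.
Qed.

Lemma kkt_vi (H : 'M[R]_n) f (B : 'M[R]_(m, n)) b S x lam :
  kkt_lin H f B b S x lam -> stop_test B b S x lam ->
  forall y, feas B b y -> 0 <= dotv (H *m x + f) (y - x).
Proof.
move=> [hout heq hin] [hpos hfx] y hy.
have -> : H *m x + f = - (B^T *m lam).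
  have hf : f = - (H *m x + B^T *m lam) by rewrite heq opprK.
  by rewrite hf opprD addrA subrr add0r.
rewrite dotvNl dotvC dotv_mulTr dotvE oppr_ge0 sumr_le0 // => i _.
case: (boolP (i \in S)) => hi.
  have e : (B *m (y - x)) i 0 = (B *m y) i 0 - b i 0.
    by rewrite mulmxBr -(hin i hi) !mxE.
  rewrite e; have := hpos i hi; have := hy i; nra.
by rewrite hout // mul0r.
Qed.


Lemma quad_exp Q c y w t : Q^T = Q ->
  2^-1 * dotv (y + t *: w) (Q *m (y + t *: w)) + dotv c (y + t *: w)
   = 2^-1 * dotv y (Q *m y) + dotv c y + t * dotv (Q *m y + c) w
     + 2^-1 * t^+2 * dotv w (Q *m w).
Proof.
move=> QT.
have Hs : dotv y (Q *m w) = dotv w (Q *m y) by rewrite dotv_mul QT dotvC.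
dnorm0; rewrite Hs (dotvC c w) (dotvC (Q *m y) w).
move: (dotv y (Q *m y)) (dotv w (Q *m y)) (dotv w (Q *m w)) (dotv c y) (dotv w c) => a1 a2 a3 a4 a5.
lra.
Qed.

Lemma quad_opt Q c (P : 'cV[R]_n -> Prop)
  (Pconv : forall u v t, 0 <= t <= 1 -> P u -> P v -> P (u + t *: (v - u)))
  (QT : Q^T = Q) (Qpsd : forall x, 0 <= dotv x (Q *m x)) y :
  P y -> (forall x, P x -> 2^-1 * dotv y (Q *m y) + dotv c y <=
                           2^-1 * dotv x (Q *m x) + dotv c x) ->
  forall x, P x -> 0 <= dotv (Q *m y + c) (x - y).
Proof.
move=> Py ymin x Px.
set w := x - y.
have hexp := fun t => quad_exp c y w t QT.
set g := dotv (Q *m y + c) w; set C := dotv w (Q *m w).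
have C0 : 0 <= C by apply: Qpsd.
rewrite leNgt; apply/negP => g0.
set t := - g / (C - g).
have Cg : 0 < C - g by lra.
have t0 : 0 < t by rewrite /t divr_gt0 // ?oppr_gt0 //.
have t1 : t <= 1 by rewrite /t ler_pdivrMr // mul1r; lra.
have ht : 0 <= t <= 1 by rewrite (ltW t0) t1.
have := ymin _ (Pconv y x t ht Py Px).
rewrite hexp -/g -/C => hle.
have k1 : 0 <= t * g + 2^-1 * t^+2 * C by lra.
have key : 0 <= t * (g + 2^-1 * t * C).
  by have -> : t * (g + 2^-1 * t * C) = t * g + 2^-1 * t^+2 * C by rewrite expr2; lra.
have key2 : 0 <= g + 2^-1 * t * C by rewrite -(pmulr_rge0 _ t0).
have htC : t * (C - g) = - g by rewrite /t mulrAC -mulrA divff ?mulr1 // lt0r_neq0.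
have tg : t * g < 0 by rewrite pmulr_rlt0.
move: key2 htC tg g0; clearbody t g C; clear; move=> *; nra.
Qed.


Section QP.
Variables (H : 'M[R]_n) (f : 'cV[R]_n) (B : 'M[R]_(m, n)) (b : 'cV[R]_m) (rho : R).
Hypothesis rho0 : 0 < rho.
Hypothesis hPD : forall x : 'cV[R]_n, x != 0 -> 0 < dotv x ((H + H^T) *m x).

Lemma PSD x : 0 <= dotv x ((H + H^T) *m x).
Proof.
case: (eqVneq x 0) => [->|/hPD/ltW //]; by rewrite dotv0l.
Qed.

Lemma Htil_T : (Htil rho H)^T = Htil rho H.
Proof.
apply/matrixP => i j; rewrite !mxE (eq_sym j i); lra.
Qed.

Lemma Htil_dot x : dotv x (Htil rho H *m x) =
   rho * dotv x x + 2^-1 * dotv x ((H + H^T) *m x).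
Proof. by rewrite /Htil /Hsym mulmxDl mul_scalar_mx -scalemxAl dotvDr dotvZr dotvZr. Qed.

Lemma Htil_PD x : x != 0 -> 0 < dotv x (Htil rho H *m x).
Proof.
move=> x0; rewrite Htil_dot.
have h1 := hPD x0.
have h2 : 0 < dotv x x.
  by rewrite lt0r dotv_ge0 andbT; apply: contra x0 => /eqP /dotv_eq0 ->.
have := mulr_gt0 rho0 h2. lra.
Qed.

Lemma Htil_psd x : 0 <= dotv x (Htil rho H *m x).
Proof. case: (eqVneq x 0) => [->|/Htil_PD/ltW //]; by rewrite dotv0l. Qed.

Lemma qp_opt z y : qp_sol rho H f B b z y ->
  forall x, feas B b x -> 0 <= dotv (Htil rho H *m y + ftil rho H f z) (x - y).
Proof.
move=> [Py ymin] x Px.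
apply: (quad_opt (Q := Htil rho H) (c := ftil rho H f z) (P := feas B b) _ Htil_T Htil_psd Py) => //.
by move=> u v t ht; apply: feas_comb.
Qed.

Lemma qp_uniq z y1 y2 : qp_sol rho H f B b z y1 -> qp_sol rho H f B b z y2 -> y1 = y2.
Proof.
move=> h1 h2; apply: (mono_uniq Htil_PD (c := ftil rho H f z)).
  exact: qp_opt h1 _ h2.1.
exact: qp_opt h2 _ h1.1.
Qed.

Lemma kkt_uniq S x1 l1 x2 l2 :
  kkt_lin H f B b S x1 l1 -> kkt_lin H f B b S x2 l2 -> x1 = x2.
Proof.
move=> [ho1 he1 hi1] [ho2 he2 hi2]; apply/eqP; rewrite -subr_eq0; apply/negP => /negP.
move/(PD_H hPD); apply/negP; rewrite -leNgt.
have hw : H *m (x1 - x2) = B^T *m (l2 - l1).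
  have E : H *m x1 + B^T *m l1 = H *m x2 + B^T *m l2 by rewrite he1 he2.
  rewrite !mulmxBr; apply/matrixP => i j; move/matrixP: E => /(_ i j).
  rewrite !mxE; lra.
rewrite hw dotv_mulTr dotvE big1 ?lexx // => i _.
case: (boolP (i \in S)) => hi.
  by rewrite mulmxBr !mxentryB hi1 // hi2 // subrr mulr0.
by rewrite mxentryB ho1 // ho2 // subrr mul0r.
Qed.

Lemma vi_uniq x1 x2 : feas B b x1 -> feas B b x2 ->
  (forall y, feas B b y -> 0 <= dotv (H *m x1 + f) (y - x1)) ->
  (forall y, feas B b y -> 0 <= dotv (H *m x2 + f) (y - x2)) -> x1 = x2.
Proof.
move=> F1 F2 V1 V2; apply: (mono_uniq (PD_H hPD) (c := f)).
  exact: V1. exact: V2.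
Qed.

End QP.
End Two.


Ltac dnorm := rewrite ?(mulmxDl, mulmxDr, mulmxBr, mulmxBl, mulmxN, mulNmx,
   mul_scalar_mx, dotvDl, dotvDr, dotvBl, dotvBr, dotvNl, dotvNr,
   dotvZl, dotvZr, dotv_mulT, dotv0l, dotv0r);
   repeat (rewrite -scalemxAr; rewrite ?(dotvZl, dotvZr));
   repeat (rewrite -scalemxAl; rewrite ?(dotvZl, dotvZr, mulmxDl, mulmxDr, dotvDl, dotvDr, dotv_mulT));
   rewrite ?dotvMl ?dotv_mulT.

Section Three.
Variables (R : realType) (n m : nat).
Variables (H : 'M[R]_n) (f : 'cV[R]_n) (B : 'M[R]_(m, n)) (b : 'cV[R]_m) (rho : R).
Hypothesis rho0 : 0 < rho.
Hypothesis hPD : forall x : 'cV[R]_n, x != 0 -> 0 < dotv x ((H + H^T) *m x).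

Definition Mm : 'M[R]_n := rho%:M + H.
Definition Gm : 'M[R]_n := rho%:M + 2^-1 *: Hsym H.

Lemma lyap_alg (e d : 'cV[R]_n) :
  dotv (Htil rho H *m d + H *m e) (e + d) <= 0 ->
  2 * dotv (Mm *m e) d + dotv d (Gm *m d) + 2^-1 * dotv e ((H + H^T) *m e) <= 0.
Proof.
have p1 := PSD hPD (e + d); have p2 := PSD hPD d.
have dd := dotv_ge0 d; have rdd : 0 <= rho * dotv d d by rewrite mulr_ge0 // ltW.
move: p1 p2 rdd; rewrite /Mm /Gm /Htil /Hsym; dnorm.
rewrite !(dotvC d e); move=> *; lra.
Qed.


Lemma dotv_pos (x : 'cV[R]_n) : x != 0 -> 0 < dotv x x.
Proof. by move=> x0; rewrite lt0r dotv_ge0 andbT; apply: contra x0 => /eqP /dotv_eq0 ->. Qed.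

Lemma Mm_unit : Mm \in unitmx.
Proof.
apply: unit_of_pos => x x0; apply: lt0r_neq0.
have h1 := PD_H hPD x0; have h2 := mulr_gt0 rho0 (dotv_pos x0).
rewrite /Mm; dnorm; lra.
Qed.

Lemma Gm_unit : Gm \in unitmx.
Proof.
apply: unit_of_pos => x x0; apply: lt0r_neq0.
have h1 := PD_H hPD x0; have h2 := mulr_gt0 rho0 (dotv_pos x0).
rewrite /Gm /Hsym; dnorm; lra.
Qed.

Lemma Gm_T : Gm^T = Gm.
Proof. apply/matrixP => i j; rewrite /Gm /Hsym !mxE (eq_sym j i); lra. Qed.

Lemma Gm_psd x : 0 <= dotv x (Gm *m x).
Proof.
have h1 := PSD hPD x; have h2 : 0 <= rho * dotv x x by rewrite mulr_ge0 ?dotv_ge0 // ltW.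
move: h1; rewrite /Gm /Hsym; dnorm; lra.
Qed.

Variable xs : 'cV[R]_n.
Hypothesis xsF : feas B b xs.
Hypothesis xsVI : forall y, feas B b y -> 0 <= dotv (H *m xs + f) (y - xs).

Definition sv (z : 'cV[R]_n) := invmx Gm *m (Mm *m (z - xs)).
Definition Vf (z : 'cV[R]_n) := dotv (sv z) (Gm *m sv z).

Lemma Vf_ge0 z : 0 <= Vf z.
Proof. exact: Gm_psd. Qed.

Lemma gneg z y : qp_sol rho H f B b z y ->
  dotv (Htil rho H *m (y - z) + H *m (z - xs)) ((z - xs) + (y - z)) <= 0.
Proof.
move=> hqp.
have h1 := qp_opt rho0 hPD hqp xsF.
have h2 := xsVI hqp.1.
move: h1 h2; rewrite /ftil /Htil /Hsym; dnorm.
rewrite ?(dotvC f) ?(dotvC y z) ?(dotvC xs z) ?(dotvC xs y) ?(dotvC z y) ?(dotvC z xs) ?(dotvC y xs).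
move=> *; lra.
Qed.


Lemma next_id z y :
  Mm *m (next_z rho H y z - xs) = Mm *m (z - xs) + Gm *m (y - z).
Proof.
rewrite mulmxBr /next_z mulKVmx ?Mm_unit //.
rewrite /Mm /Gm /Hsym; dnorm.
apply/matrixP => i j; rewrite !(mxentryD, mxentryB, mxentryN, mxentryZ); lra.
Qed.

Lemma lyap_step z y : qp_sol rho H f B b z y ->
  Vf (next_z rho H y z) + 2^-1 * dotv (z - xs) ((H + H^T) *m (z - xs)) <= Vf z.
Proof.
move=> hqp.
have hs : sv (next_z rho H y z) = sv z + (y - z).
  by rewrite /sv next_id mulmxDr mulKmx ?Gm_unit.
have hG : Gm *m sv z = Mm *m (z - xs) by rewrite /sv mulKVmx ?Gm_unit.
have hsym : forall u v, dotv u (Gm *m v) = dotv v (Gm *m u).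
  by move=> u v; rewrite dotv_mul Gm_T dotvC.
have := lyap_alg (gneg hqp).
rewrite /Vf hs; move: (y - z) hsym hG => d hsym hG.
move: (z - xs) hG => e hG.
rewrite [Gm *m (sv z + d)]mulmxDr !dotvDl !dotvDr -(hsym d (sv z)) hG.
rewrite (dotvC d (Mm *m e)).
lra.
Qed.

End Three.


Lemma noninc_nat_const (p : nat -> nat) :
  (forall k, (p k.+1 <= p k)%N) -> exists K, forall k, (K <= k)%N -> p k = p K.
Proof.
move: {2}(p 0%N) (leqnn (p 0%N)) => B; elim: B p => [|B IH] p hB hdec.
- have hle : forall k, (p k <= p 0%N)%N.
    by elim=> // k ihk; apply: leq_trans (hdec k) ihk.
  exists 0%N => k _; apply/eqP; rewrite eqn_leq hle /=.
  by move: (hle k); rewrite leqn0 in hB; rewrite (eqP hB) leqn0 => /eqP ->.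
- have hle : forall j k, (j <= k)%N -> (p k <= p j)%N.
    move=> j k /subnK <-; elim: (k - j)%N => // i ihi.
    by rewrite addSn; apply: leq_trans (hdec _) ihi.
  case: (pselect (exists k, (p k < p 0%N)%N)) => [[k hk]|hno].
    have hB' : (p (0 + k)%N <= B)%N by rewrite add0n -ltnS; apply: leq_trans hk hB.
    have [K' hK'] := IH (fun j => p (j + k)%N) hB' (fun j => hdec (j + k)%N).
    exists (K' + k)%N => j hj.
    have := hK' (j - k)%N; rewrite subnK; last by apply: leq_trans hj; apply: leq_addl.
    apply; rewrite leq_subRL; [by rewrite addnC | by apply: leq_trans hj; apply: leq_addl].
  exists 0%N => k _; apply/eqP; rewrite eqn_leq hle //= leqNgt.
  by apply/negP => h; apply: hno; exists k.
Qed.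

Section Four.
Variables (R : realType) (n m : nat).
Variables (H : 'M[R]_n) (f : 'cV[R]_n) (B : 'M[R]_(m, n)) (b : 'cV[R]_m) (rho : R).
Hypothesis rho0 : 0 < rho.
Hypothesis hPD : forall x : 'cV[R]_n, x != 0 -> 0 < dotv x ((H + H^T) *m x).

Definition realized (S : {set 'I_m}) (v : R) : Prop :=
  exists zt lam yt, [/\ kkt_lin H f B b S zt lam, qp_sol rho H f B b zt yt &
                        v = enorm (yt - zt)].

Lemma realized_uniq S v1 v2 : realized S v1 -> realized S v2 -> v1 = v2.
Proof.
move=> [z1 [l1 [y1 [k1 q1 ->]]]] [z2 [l2 [y2 [k2 q2 ->]]]].
have ez := kkt_uniq hPD k1 k2; subst z2.
by rewrite (qp_uniq rho0 hPD q1 q2).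
Qed.

Definition dle (d' d : option R) := forall v, lt_delta v d' -> lt_delta v d.

Definition pot (d : option R) : nat :=
  #|finset (fun S : {set 'I_m} => `[< exists v, realized S v /\ lt_delta v d >])|.

Lemma pot_mono d' d : dle d' d -> (pot d' <= pot d)%N.
Proof.
move=> hd; rewrite /pot; apply: subset_leq_card; apply/fintype.subsetP => S; rewrite !inE.
move=> [v [hv hl]]; exists v; split => //; exact: hd.
Qed.

Lemma pot_strict d S v : realized S v -> lt_delta v d -> (pot (Some v) < pot d)%N.
Proof.
move=> hr hl; rewrite /pot; apply: proper_card; apply/properP; split.
  apply/fintype.subsetP => S'; rewrite !inE => -[u [hu hul]].
  exists u; split => //; case: d hl => [d|] //= hl; apply: lt_trans hul hl.
exists S; rewrite !inE; first by exists v.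
apply/negP => /asboolP [u [hu hul]].
by rewrite (realized_uniq hu hr) /= ltxx in hul.
Qed.

Lemma iter_facts zk prev dk zf yf Ak dk' :
  iter_nostop rho H f B b zk prev dk zf yf Ak dk' ->
  [/\ qp_sol rho H f B b zf yf, dle dk' dk &
      zf = zk \/ exists S v, [/\ realized S v, lt_delta v dk & dk' = Some v]].
Proof.
move=> [yk [hq]]; case: ifP => _.
  move=> [zt [lam [yt [hk hns hqt hA]]]].
  case: asboolP => hlt.
    move=> [-> -> ->]; split => //.
      move=> u /= hu; case: dk hlt => [d|] //= hlt; apply: lt_trans hu hlt.
    right; exists (active B b yk), (enorm (yt - zt)); split => //.
    by exists zt, lam, yt.
  by move=> [-> -> ->]; split => //; left.
by move=> [-> -> _ ->]; split => //; left.
Qed.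

End Four.


Lemma tail_small (R : realType) (W q : nat -> R) :
  (forall j, 0 <= W j) -> (forall j, 0 <= q j) -> (forall j, W j.+1 + q j <= W j) ->
  forall eps, 0 < eps -> exists N, forall j, (N <= j)%N -> q j < eps.
Proof.
move=> W0 q0 Wd eps eps0.
have Wn : nonincreasing_seq W.
  apply/nonincreasing_seqP => j; have := Wd j; have := q0 j; lra.
have Wc : cvgn W.
  apply: nonincreasing_is_cvgn Wn _; exists 0 => _ [j _ <-]; exact: W0.
have Wl : W @ \oo --> limn W := Wc.
set l := limn W.
have WSl : [sequence W j.+1]_j @ \oo --> l by rewrite cvg_shiftS.
have D0 : (W - [sequence W j.+1]_j) @ \oo --> (0:R) by rewrite -(subrr l); apply: cvgB.
move/cvgr0Pnorm_lt: D0 => /(_ _ eps0) [N _ hN].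
exists N => j /hN /=; have := Wd j; have := q0 j.
rewrite [(W - _) j]/(W j - W j.+1) => h1 h2 h3.
have : W j - W j.+1 <= `|W j - W j.+1| by apply: ler_norm.
lra.
Qed.



Lemma dotv_delta (R : realType) n (i : 'I_n) (x : 'cV[R]_n) :
  dotv (delta_mx i 0) x = x i 0.
Proof. by rewrite /dotv trmx_delta -rowE mxE. Qed.

Lemma entry_bound (R : realType) n (H : 'M[R]_n) :
  (forall x : 'cV[R]_n, x != 0 -> 0 < dotv x ((H + H^T) *m x)) ->
  exists C : R, 0 <= C /\ forall (x : 'cV[R]_n) i a, 0 < a ->
    2 * a * `|x i 0| <= a ^+ 2 * C + dotv x ((H + H^T) *m x).
Proof.
move=> hPD.
set S := H + H^T.
have ST : S^T = S by rewrite /S linearD /= trmxK addrC.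
have Su : S \in unitmx.
  by apply: unit_of_pos => x /hPD /lt0r_neq0.
pose w (i : 'I_n) : 'cV[R]_n := invmx S *m delta_mx i 0.
exists (\sum_i dotv (w i) (S *m w i)); split.
  by apply: sumr_ge0 => i _; apply: PSD.
move=> x i a a0.
have hx : x i 0 = dotv (w i) (S *m x).
  rewrite -dotv_delta -[delta_mx i 0](mulKVmx Su) -/(w i).
  by rewrite dotvC dotv_mul ST dotvC.
have hC : dotv (w i) (S *m w i) <= \sum_i dotv (w i) (S *m w i).
  rewrite (bigD1 i) //= lerDl; apply: sumr_ge0 => j _; exact: PSD.
have sym : dotv x (S *m w i) = dotv (w i) (S *m x).
  by rewrite dotv_mul ST dotvC.
have p1 := PSD hPD (a *: w i - x).
have p2 := PSD hPD (a *: w i + x).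
rewrite -/S in p1 p2.
move: p1 p2; rewrite !(mulmxDr, mulmxBr, dotvDl, dotvDr, dotvBl, dotvBr) -!scalemxAr !(mulmxN, dotvNl, dotvNr, dotvZl, dotvZr) sym.
rewrite hx => p1 p2.
have ha2 : a ^+ 2 * dotv (w i) (S *m w i) <= a ^+ 2 * \sum_i dotv (w i) (S *m w i).
  by rewrite ler_wpM2l // sqr_ge0.
case: (lerP 0 (dotv (w i) (S *m x))) => hs.
  rewrite ger0_norm //; rewrite expr2 in ha2 *; nra.
rewrite ltr0_norm //; rewrite expr2 in ha2 *; nra.
Qed.

End Aux.
Import Aux.
Unset Implicit Arguments. Set Strict Implicit. Set Printing Implicit Defensive.

Theorem theorem1 (R : realType) (n m : nat)
    (H : 'M[R]_n) (f : 'cV[R]_n) (A : 'M[R]_(m, n)) (b : 'cV[R]_m)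
    (rho : R) (z0 xs : 'cV[R]_n) :
  0 < rho ->
  (exists x, feas A b x) ->
  (forall x : 'cV[R]_n, x != 0 -> 0 < dotv x ((H + H^T) *m x)) ->
  feas A b xs ->
  (forall y, feas A b y -> 0 <= dotv (H *m xs + f) (y - xs)) ->
  (* infinite runs: z_k --> x* *)
  (forall (z zf yf : nat -> 'cV[R]_n) (act : nat -> {set 'I_m})
          (delta : nat -> option R),
      drdaqp_run rho H f A b z0 z zf yf act delta ->
      z @ \oo --> xs)
  /\
  (* finite runs: if the algorithm stops at iteration N, it returns x* *)
  (forall (N : nat) (z zf yf : nat -> 'cV[R]_n) (act : nat -> {set 'I_m})
          (delta : nat -> option R) (zt : 'cV[R]_n) (lam : 'cV[R]_m),
      drdaqp_prefix rho H f A b z0 N z zf yf act delta ->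
      iter_stop rho H f A b (z N)
        (if N is N'.+1 then Some (act N') else None) zt lam ->
      zt = xs).
Proof.
move=> rho0 _ hPD xsF xsVI; split; last first.
  move=> N z zf yf act delta zt lam _ [yk [hq hprev hk hst]].
  exact: (vi_uniq hPD hst.2 xsF (kkt_vi hk hst) xsVI).
move=> z zf yf act delta hrun.
have hstep : forall k, iter_nostop rho H f A b (z k)
    (if k is k'.+1 then Some (act k') else None) (delta k)
    (zf k) (yf k) (act k) (delta k.+1) /\ z k.+1 = next_z rho H (yf k) (zf k).
  by move=> k; have [_ _ h] := hrun k.+1; exact: h.
pose p k := pot H f A b rho (delta k).
have pdec : forall k, (p k.+1 <= p k)%N.
  by move=> k; have [_ hd _] := iter_facts (hstep k).1; exact: pot_mono.
have [K hK] := noninc_nat_const pdec.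
have hzf : forall k, (K <= k)%N -> zf k = z k.
  move=> k hk; have [_ _ [//|[S [v [hr hl he]]]]] := iter_facts (hstep k).1.
  have := pot_strict rho0 hPD hr hl; rewrite -he.
  rewrite -/(p k.+1) -/(p k) (hK k.+1) ?(hK k) ?ltnn //; exact: leqW.
have hV : forall k, (K <= k)%N -> Vf H rho xs (z k.+1) +
    2^-1 * dotv (z k - xs) ((H + H^T) *m (z k - xs)) <= Vf H rho xs (z k).
  move=> k hk; have [hq _ _] := iter_facts (hstep k).1.
  rewrite (hstep k).2; have := lyap_step rho0 hPD xsF xsVI hq.
  by rewrite (hzf k hk).
have [C [C0 hC]] := entry_bound hPD.
apply/cvgrPdist_lt => eps eps0.
pose a := eps / (C + 1).
have C1 : 0 < C + 1 by lra.
have a0 : 0 < a by rewrite /a divr_gt0.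
have aC : a * C < eps.
  rewrite /a mulrAC ltr_pdivrMr //; nra.
have d0 : 0 < a * eps / 2 by rewrite divr_gt0 // mulr_gt0.
have q0 : forall j, 0 <= 2^-1 * dotv (z (j + K)%N - xs) ((H + H^T) *m (z (j + K)%N - xs)).
  by move=> j; apply: mulr_ge0; [rewrite invr_ge0 | exact: PSD].
have Wd : forall j, Vf H rho xs (z (j.+1 + K)%N) +
   2^-1 * dotv (z (j + K)%N - xs) ((H + H^T) *m (z (j + K)%N - xs)) <= Vf H rho xs (z (j + K)%N).
  by move=> j; rewrite addSn; apply: hV; apply: leq_addl.
have [N hN] := tail_small (W := fun j => Vf H rho xs (z (j + K)%N))
   (q := fun j => 2^-1 * dotv (z (j + K)%N - xs) ((H + H^T) *m (z (j + K)%N - xs)))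
   (fun j => Vf_ge0 rho0 hPD xs _) q0 Wd d0.
exists (N + K)%N => // t /= ht.
have htK : t = ((t - K) + K)%N by rewrite subnK // (leq_trans _ ht) // leq_addl.
have hTK : (N <= t - K)%N.
  by rewrite leq_subRL; [rewrite addnC | apply: leq_trans ht; apply: leq_addl].
have := hN _ hTK; rewrite /= -htK => hq.
rewrite /Num.norm /= mx_normrE.
apply: bigmax_lt => // -[i j] _ /=; rewrite (ord1 j).
have := hC (z t - xs) i a a0.
rewrite mxentryB distrC -mxentryB.
move: (`|(z t - xs) i 0|) => y.
move: (dotv (z t - xs) ((H + H^T) *m (z t - xs))) hq => Q hq hy.
have : a ^+ 2 * C < a * eps by rewrite expr2 -mulrA ltr_pM2l.
move: hy hq; clear -a0 eps0; move=> *; nra.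
Qed.
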